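(* Let $A$ be a finite nonempty set, $f\in\mathrm{Op}(A)$ and let $\rho$ be a generalized quasiorder on $A$. Then $f$ preserves $\rho$ if and only if every translation $g\in\mathrm{trl}(f)$ preserves $\rho$. Consequently, $\mathrm{Pol}\,\rho=(\mathrm{End}\,\rho)^{*}$.
   Context: $\mathrm{Op}(A)$ is the set of all operations $f:A^n\to A$, $n\ge1$. An $n$-ary $f$ preserves an $m$-ary relation $\rho$ if for all $r_1,\dots,r_n\in\rho$ the tuple obtained by applying $f$ componentwise, $(f(r_1(1),\dots,r_n(1)),\dots,f(r_1(m),\dots,r_n(m)))$, lies in $\rho$. $\mathrm{Pol}\,\rho$ is the set of all operations preserving $\rho$, $\mathrm{End}\,\rho$ the set of unary ones. For $n$-ary $f$, a translation is a unary map $x\mapsto f(a_1,\dots,a_{i-1},x,a_{i+1},\dots,a_n)$ with fixed $a_j\in A$; $\mathrm{trl}(f)$ is the set of all translations (for unary $f$, $\mathrm{trl}(f)=\{f\}$). For $M\subseteq A^A$, $M^*:=\{f\in\mathrm{Op}(A)\mid\mathrm{trl}(f)\subseteq M\}$. An $m$-ary relation $\rho$ is a generalized quasiorder if it is reflexive ($(a,\dots,a)\in\rho$ for all $a$) and transitive: for every $m\times m$-matrix $(a_{ij})$ over $A$ all of whose rows and columns belong to $\rho$, the diagonal $(a_{11},\dots,a_{mm})$ belongs to $\rho$. *)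

(* Defs.v *)
From mathcomp Require Import all_boot.
Set Implicit Arguments. Unset Strict Implicit. Unset Printing Implicit Defensive.

Definition relation (A : finType) (m : nat) := {set {ffun 'I_m -> A}}.

Definition preserves (A : finType) (n m : nat) (f : {ffun 'I_n -> A} -> A)
  (rho : relation A m) : Prop :=
  forall r : 'I_n -> {ffun 'I_m -> A},
    (forall j, r j \in rho) -> [ffun i => f [ffun j => r j i]] \in rho.

Definition unary_op (A : finType) (g : A -> A) : {ffun 'I_1 -> A} -> A :=
  fun x => g (x ord0).

Definition End_rel (A : finType) (m : nat) (rho : relation A m) (g : A -> A) : Prop :=
  preserves (unary_op g) rho.

Definition is_trl (A : finType) (n : nat) (f : {ffun 'I_n -> A} -> A) (g : A -> A) : Prop :=
  exists (i : 'I_n) (a : {ffun 'I_n -> A}),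
    forall x, g x = f [ffun j => if j == i then x else a j].

(* Op(A): operations of arity n >= 1, arity written as n.+1. *)
Definition Op (A : finType) := {n : nat & {ffun 'I_n.+1 -> A} -> A}.

Definition Pol (A : finType) (m : nat) (rho : relation A m) (F : Op A) : Prop :=
  preserves (projT2 F) rho.

Definition star (A : finType) (M : (A -> A) -> Prop) (F : Op A) : Prop :=
  forall g, is_trl (projT2 F) g -> M g.

Definition reflexive_rel (A : finType) (m : nat) (rho : relation A m) : Prop :=
  forall a : A, [ffun _ : 'I_m => a] \in rho.

Definition transitive_rel (A : finType) (m : nat) (rho : relation A m) : Prop :=
  forall M : 'I_m -> 'I_m -> A,
    (forall i, [ffun j => M i j] \in rho) ->
    (forall j, [ffun i => M i j] \in rho) ->
    [ffun i => M i i] \in rho.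

Definition gen_quasiorder (A : finType) (m : nat) (rho : relation A m) : Prop :=
  reflexive_rel rho /\ transitive_rel rho.

(* Main.v *)
Require Import Defs.
From mathcomp Require Import all_boot.

Lemma in_eq {A : finType} {m : nat} {S : relation A m} {x y : {ffun 'I_m -> A}} : x \in S -> x = y -> y \in S.
Proof. by move=> h <-. Qed.

Lemma trl_pres (A : finType) (n m : nat) (rho : relation A m) (f : {ffun 'I_n -> A} -> A) :
  (forall g, is_trl f g -> End_rel rho g) ->
  forall (i : 'I_n) (a : {ffun 'I_n -> A}) (r : {ffun 'I_m -> A}), r \in rho ->
  [ffun l => f [ffun j => if j == i then r l else a j]] \in rho.
Proof.
move=> H i a r Hr.
have Hg : is_trl f (fun x => f [ffun j => if j == i then x else a j]) by exists i, a.
have H1 := H _ Hg (fun _ => r) (fun _ => Hr).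
rewrite /unary_op in H1. refine (in_eq H1 _).
apply/ffunP=> l; rewrite !ffunE //.
Qed.

Lemma main_dir (A : finType) (x0 : A) (n m : nat) (rho : relation A m)
  (hrho : gen_quasiorder rho) (f : {ffun 'I_n -> A} -> A) :
  (forall g, is_trl f g -> End_rel rho g) -> preserves f rho.
Proof.
move=> H r Hr.
case: hrho => Hrefl Htr.
have P : forall (k : nat) (a : {ffun 'I_n -> A}), [ffun l : 'I_m => f [ffun j : 'I_n => if (j < k)%N then r j l else a j]] \in rho.
  elim=> [|k IH] a.
    refine (in_eq (Hrefl (f a)) _); apply/ffunP=> l; rewrite !ffunE.
    congr f; apply/ffunP=> j; rewrite ffunE //.
  case: (ltnP k n) => hk; last first.
    refine (in_eq (IH a) _); apply/ffunP=> l; rewrite !ffunE.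
    congr f; apply/ffunP=> j; rewrite !ffunE.
    have hj : (j < k)%N by apply: leq_trans (ltn_ord j) hk.
    by rewrite hj ltnS ltnW.
  pose kk := Ordinal hk.
  pose M := fun (p l : 'I_m) => f [ffun j : 'I_n => if (j < k)%N then r j p else
                            if j == kk then r kk l else a j].
  have E : [ffun i : 'I_m => M i i] =
     [ffun l : 'I_m => f [ffun j : 'I_n => if (j < k.+1)%N then r j l else a j]].
    apply/ffunP=> l; rewrite !ffunE /M; congr f; apply/ffunP=> j; rewrite !ffunE.
    case: (ltngtP j k) => hjk.
    - by rewrite ltnS ltnW.
    - have hne : (j == kk) = false by apply/eqP => hj; move: hjk; rewrite hj /= ltnn.
      have h2 : (j < k.+1) = false by rewrite ltnS leqNgt hjk.
      by rewrite hne h2.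
    - have hj : j = kk by apply: val_inj.
      by rewrite hjk ltnSn hj eqxx.
  rewrite -E; apply: (Htr (fun p l => M p l)).
    move=> p.
    refine (in_eq (@trl_pres _ _ _ _ _ H kk [ffun j : 'I_n => if (j < k)%N then r j p else a j] _ (Hr kk)) _).
    apply/ffunP=> l; rewrite !ffunE /M; congr f.
    apply/ffunP=> j; rewrite !ffunE.
    case: eqP => [->|_]; first by rewrite /= ltnn.
    by case: ifP.
  move=> l.
  refine (in_eq (IH [ffun j => if j == kk then r kk l else a j]) _).
  apply/ffunP=> p; rewrite !ffunE /M; congr f.
  apply/ffunP=> j; rewrite !ffunE //.
refine (in_eq (P n [ffun=> x0]) _); apply/ffunP=> l; rewrite !ffunE.
congr f; apply/ffunP=> j; rewrite !ffunE ltn_ord //.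
Qed.

Lemma other_dir (A : finType) (n m : nat) (rho : relation A m)
  (hrho : gen_quasiorder rho) (f : {ffun 'I_n -> A} -> A) :
  preserves f rho -> (forall g, is_trl f g -> End_rel rho g).
Proof.
move=> H g [i [a Hg]] r Hr.
case: hrho => Hrefl _.
have Hin : forall j, (if j == i then r ord0 else [ffun=> a j]) \in rho.
  move=> j; case: ifP => _; [exact: Hr | exact: Hrefl].
apply: (in_eq (H (fun j => if j == i then r ord0 else [ffun=> a j]) Hin)).
apply/ffunP=> l; rewrite !ffunE /unary_op Hg; congr f.
apply/ffunP=> j; rewrite !ffunE; case: ifP => //; rewrite ffunE //.
Qed.

Theorem theorem3p7 (A : finType) (hA : 0 < #|A|) (m : nat) (rho : relation A m)
  (hrho : gen_quasiorder rho) :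
  (forall (n : nat) (f : {ffun 'I_n.+1 -> A} -> A),
     preserves f rho <-> (forall g, is_trl f g -> End_rel rho g)) /\
  (forall F : Op A, Pol rho F <-> star (End_rel rho) F).
Proof.
have [x0 _] := card_gt0P hA.
have K : forall (n : nat) (f : {ffun 'I_n -> A} -> A),
     preserves f rho <-> (forall g, is_trl f g -> End_rel rho g).
  move=> n f; split; [exact: other_dir | exact: main_dir x0 _ _ _ hrho f].
split; first by move=> n f; exact: K.
case=> n f; exact: K.
Qed.
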